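(* Let $k$ be a positive integer and $n\ge 4$. Then the perfect number $N_{(n,2)}$ equals $k^2-k$ if $n=2k$, and equals $k^2$ if $n=2k+1$.
   Context: Let $S=K[x_1,\ldots,x_n]$ over a field $K$, and $sm(S)_d$ the set of square-free monomials of degree $d$. For a set $A$ of square-free monomials, $\sqcup(A)=\{gx_i\mid g\in A,\ x_i\nmid g\}$ and $\sqcap(A)=\{h\ne 1\mid h=g/x_i \text{ for some } g\in A,\ x_i\mid g\}$. A set $A\subseteq sm(S)_d$ is $(n,d)^{th}$ perfect if $\sqcup(A)=sm(S)_{d+1}$ and $\sqcap(A)=sm(S)_{d-1}$. The perfect number $N_{(n,d)}$ is the least cardinality of an $(n,d)^{th}$ perfect set. *)

(* Defs.v *)
(* Square-free monomials in x_1..x_n are encoded by their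
   supports: a square-free monomial of degree d is a set S : {set 'I_n}
   with #|S| = d (the monomial 1 is set0). *)
From mathcomp Require Import all_boot.
Set Implicit Arguments. Unset Strict Implicit. Unset Printing Implicit Defensive.

Definition sm (n d : nat) : {set {set 'I_n}} := [set S : {set 'I_n} | #|S| == d].

(* up-shadow: { g x_i | g in A, x_i does not divide g } *)
Definition sqcup (n : nat) (A : {set {set 'I_n}}) : {set {set 'I_n}} :=
  [set i |: S | S in A, i in ~: S].

(* down-shadow: { h <> 1 | h = g / x_i, g in A, x_i divides g } *)
Definition sqcap (n : nat) (A : {set {set 'I_n}}) : {set {set 'I_n}} :=
  [set S :\ i | S in A, i in S] :\ set0.

Definition perfect (n d : nat) (A : {set {set 'I_n}}) : bool :=
  [&& A \subset sm n d, sqcup A == sm n d.+1 & sqcap A == sm n d.-1].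

Definition is_perfect_number (n d N : nat) : Prop :=
  (exists A : {set {set 'I_n}}, perfect d A /\ #|A| = N) /\
  (forall A : {set {set 'I_n}}, perfect d A -> N <= #|A|).

(* Main.v *)
Require Import Defs.
From mathcomp Require Import all_boot zify.
Set Implicit Arguments. Unset Strict Implicit. Unset Printing Implicit Defensive.

Definition E n (A : {set {set 'I_n}}) (W : {set 'I_n}) := [set e in A | e \subset W].

Lemma step n (A : {set {set 'I_n}}) (W : {set 'I_n}) u v :
  u \in W -> v \in W -> u != v ->
  (forall w, w \in W -> w != u -> w != v -> ([set u; w] \in A) || ([set v; w] \in A)) ->
  #|E A (W :\: [set u; v])| + (#|W| - 2) <= #|E A W|.
Proof.
move=> Hu Hv Huv Hc.
set W' := W :\: [set u; v].
have cW' : #|W'| = #|W| - 2.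
  rewrite cardsD; have -> : W :&: [set u; v] = [set u; v].
    by apply/setIidPr; rewrite subUset !sub1set Hu Hv.
  by rewrite cards2 Huv.
have inW' : forall w, w \in W' -> [/\ w \in W, w != u & w != v].
  by move=> w; rewrite !inE negb_or => /andP [/andP [-> ->] ->].
pose g w := if [set u; w] \in A then [set u; w] else [set v; w].
have gx : forall x, x \in g x by move=> x; rewrite /g; case: ifP; rewrite !inE eqxx orbT.
have ginj : {in W' &, injective g}.
  move=> x y /inW' [xW xu xv] /inW' [yW yu yv] hg.
  have := gx x; rewrite hg /g; case: ifP => _; rewrite !inE.
    by rewrite (negbTE xu) /= => /eqP.
  by rewrite (negbTE xv) /= => /eqP.
have gA : forall w, w \in W' -> g w \in E A W.
  move=> w /inW' [wW wu wv]; rewrite /E inE /g.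
  have := Hc w wW wu wv.
  case: ifP => h1 /=.
    by rewrite h1 subUset !sub1set Hu wW.
  by move=> h2; rewrite h2 subUset !sub1set Hv wW.
have gnot : forall w, g w \notin E A W'.
  move=> w; rewrite /E inE negb_and; apply/orP; right; apply/negP => /subsetP h.
  rewrite /g in h; case: ifP h => _ h.
    by have := h u (set21 _ _); rewrite !inE eqxx.
  by have := h v (set21 _ _); rewrite !inE eqxx orbT.
have sub : E A W' :|: [set g w | w in W'] \subset E A W.
  rewrite subUset; apply/andP; split.
    apply/subsetP => e; rewrite /E !inE => /andP [-> /subset_trans]; apply.
    by apply/subsetP => x; rewrite inE => /andP [].
  by apply/subsetP => e /imsetP [z hz ->]; apply: gA.
have := subset_leq_card sub.
rewrite cardsU card_in_imset // cW'.
have -> : E A W' :&: [set g w | w in W'] = set0.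
  apply/setP => e; rewrite in_setI in_set0; apply/negbTE/andP => [[h1 /imsetP [z hz he]]].
  by move: h1; rewrite he (negbTE (gnot z)).
by rewrite cards0 subn0.
Qed.

Lemma arith m e e' : 2 <= m -> (m - 2 - 1) ^ 2 <= 4 * e' + 1 -> e' + (m - 2) <= e ->
  (m - 1) ^ 2 <= 4 * e + 1.
Proof.
move=> h1 h2 h3.
case: m h1 h2 h3 => [|[|[|p]]] //= _; first by lia.
have -> : p.+3 - 2 - 1 = p by lia.
have -> : p.+3 - 2 = p.+1 by lia.
have -> : p.+3 - 1 = p.+2 by lia.
rewrite !expnS !expn0 !muln1 => h2 h3; nia.
Qed.

Lemma lower n (A : {set {set 'I_n}})
  (hc : forall u v w, u != v -> u != w -> v != w -> [set u; v] \notin A ->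
        ([set u; w] \in A) || ([set v; w] \in A)) :
  forall W : {set 'I_n}, (#|W| - 1) ^ 2 <= 4 * #|E A W| + 1.
Proof.
move=> W; move: {2}#|W| (leqnn #|W|) => m; elim: m W => [|m IH] W hW.
  by move: hW; rewrite leqn0 => /eqP ->.
have [le1|gt1] := leqP #|W| 1.
  by have -> : #|W| - 1 = 0 by lia.
have fin : forall u v, u \in W -> v \in W -> u != v ->
    (forall w, w \in W -> w != u -> w != v -> ([set u; w] \in A) || ([set v; w] \in A)) ->
    (#|W| - 1) ^ 2 <= 4 * #|E A W| + 1.
  move=> u v hu hv huv hcov.
  have st := step hu hv huv hcov.
  have cW' : #|W :\: [set u; v]| = #|W| - 2.
    rewrite cardsD; have -> : W :&: [set u; v] = [set u; v].
      by apply/setIidPr; rewrite subUset !sub1set hu hv.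
    by rewrite cards2 huv.
  have := IH (W :\: [set u; v]); rewrite cW' => ih.
  apply: (arith gt1 _ st); apply: ih; lia.
case: (boolP [exists u, exists v, [&& u \in W, v \in W, u != v & [set u; v] \notin A]]).
  move=> /existsP [u /existsP [v /and4P [hu hv huv hA]]].
  apply: (fin u v hu hv huv) => w hw hwu hwv.
  by apply: hc; rewrite // eq_sym.
move=> /existsPn hno.
have [u [v [hu hv huv]]] := card_gt1P gt1.
apply: (fin u v hu hv huv) => w hw hwu hwv.
have := existsPn (hno u) w; rewrite hu hw eq_sym hwu /= negbK => ->.
by [].
Qed.

Lemma cover n (A : {set {set 'I_n}}) : perfect 2 A ->
  forall u v w, u != v -> u != w -> v != w -> [set u; v] \notin A ->
        ([set u; w] \in A) || ([set v; w] \in A).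
Proof.
move=> /and3P [hA /eqP hup _] u v w huv huw hvw hnA.
have : u |: [set v; w] \in sm n 3.
  by rewrite inE cardsU1 cards2 hvw !inE negb_or huv huw.
rewrite -hup => /imset2P [S i HS Hi hT].
have hS2 : #|S| = 2 by have := subsetP hA S HS; rewrite inE => /eqP.
have hsub : S \subset u |: [set v; w] by rewrite hT subsetUr.
have eq2 : forall a b, a != b -> [set a; b] \subset S -> [set a; b] = S.
  by move=> a b hab hs; apply/eqP; rewrite eqEcard hs hS2 cards2 hab.
have eq2' : forall a b, a != b -> S \subset [set a; b] -> S = [set a; b].
  by move=> a b hab hs; apply/eqP; rewrite eqEcard hs hS2 cards2 hab.
case: (boolP (w \in S)) => hw.
  case: (boolP (u \in S)) => hu.
    by rewrite (eq2 u w huw) ?HS // subUset !sub1set hu hw.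
  rewrite -(eq2' v w hvw) ?HS ?orbT //.
  apply/subsetP => y hy; move: (subsetP hsub y hy); rewrite !inE => /or3P [/eqP ey|->|->]; rewrite ?orbT //.
  by rewrite -ey hy in hu.
exfalso; move/negP: hnA; apply.
rewrite -(eq2' u v huv) //.
apply/subsetP => y hy; move: (subsetP hsub y hy); rewrite !inE => /or3P [->|->|/eqP ey]; rewrite ?orbT //.
by rewrite -ey hy in hw.
Qed.

Lemma bin2x m : 2 * 'C(m, 2) = m * (m - 1).
Proof.
elim: m => [|m IH] //.
rewrite binS bin1 mulnDr IH. case: m IH => [|m] _ //. nia.
Qed.

Definition twocl n (L : {set 'I_n}) : {set {set 'I_n}} :=
  [set e : {set 'I_n} | e \subset L & #|e| == 2] :|: [set e : {set 'I_n} | e \subset ~: L & #|e| == 2].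

Lemma twocl_card n (L : {set 'I_n}) : #|twocl L| = 'C(#|L|, 2) + 'C(#|~: L|, 2).
Proof.
rewrite /twocl cardsU !cards_draws.
have -> : [set e : {set 'I_n} | e \subset L & #|e| == 2] :&: [set e : {set 'I_n} | e \subset ~: L & #|e| == 2] = set0.
  apply/setP => e; rewrite !inE; apply/negbTE/negP => /andP [/andP [h1 h2] /andP [h3 _]].
  have : e \subset L :&: ~: L by rewrite subsetI h1 h3.
  rewrite setICr subset0 => /eqP he; by rewrite he cards0 in h2.
by rewrite cards0 subn0.
Qed.

Lemma twocl_mem n (L : {set 'I_n}) e : e \in twocl L = (#|e| == 2) && ((e \subset L) || (e \subset ~: L)).
Proof. by rewrite /twocl !inE; case: (#|e| == 2); rewrite ?andbT ?andbF. Qed.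

Lemma twocl_perfect n (L : {set 'I_n}) : 2 <= #|L| -> 2 <= #|~: L| -> perfect 2 (twocl L).
Proof.
move=> hL hLc.
have side : forall X : {set 'I_n}, (X = L) \/ (X = ~: L) ->
    forall e : {set 'I_n}, e \subset X -> #|e| == 2 -> e \in twocl L.
  move=> X [->|->] e h1 h2; by rewrite twocl_mem h2 h1 ?orbT.
apply/and3P; split.
- apply/subsetP => e; by rewrite twocl_mem inE => /andP [].
- apply/eqP/setP => T; apply/idP/idP.
    move=> /imset2P [S i HS Hi ->]; rewrite inE cardsU1.
    move: HS Hi; rewrite twocl_mem inE => /andP [/eqP -> _] ->; by [].
  rewrite inE => /eqP hT.
  have key : forall X : {set 'I_n}, (X = L) \/ (X = ~: L) -> 1 < #|T :&: X| ->
       T \in sqcup (twocl L).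
    move=> X hX /card_gt1P [x [y [hx hy hxy]]].
    have hS : [set x; y] \in twocl L.
      apply: (side X hX); last by rewrite cards2 hxy.
      by rewrite subUset !sub1set; move: hx hy; rewrite !inE => /andP [_ ->] /andP [_ ->].
    have hsub : [set x; y] \subset T.
      by rewrite subUset !sub1set; move: hx hy; rewrite !inE => /andP [-> _] /andP [-> _].
    have : #|T :\: [set x; y]| == 1.
      by rewrite cardsD (setIidPr hsub) cards2 hxy hT.
    move=> /cards1P [i hi].
    have hiT : i \in T :\: [set x; y] by rewrite hi set11.
    have -> : T = i |: [set x; y].
      apply/setP => z; rewrite in_setU1.
      case: (boolP (z \in [set x; y])) => hz.
        by rewrite orbT (subsetP hsub z hz).
      have hz' : (z \in T :\: [set x; y]) = (z \in [set i]) by rewrite hi.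
      by rewrite in_setD hz in_set1 /= in hz'; rewrite hz' orbF.
    apply: imset2_f => //.
    by move: hiT; rewrite !inE => /andP [].
  have := cardsID L T; rewrite hT setDE.
  case: (ltnP 1 #|T :&: L|) => h1; first by move=> _; apply: (key L) => //; left.
  move=> h2; apply: (key (~: L)); first by right.
  lia.
- apply/eqP/setP => T; apply/idP/idP.
    rewrite /sqcap !inE => /andP [hT0 /imset2P [S i HS Hi ->]].
    move: HS; rewrite twocl_mem => /andP [/eqP hS2 _].
    have := cardsD1 i S; rewrite Hi hS2 /= => h; apply/eqP; lia.
  rewrite inE => /cards1P [j ->].
  have key : forall X : {set 'I_n}, (X = L) \/ (X = ~: L) -> 1 < #|X| -> j \in X ->
       [set j] \in sqcap (twocl L).
    move=> X hX hX2 hj.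
    have : 0 < #|X :\ j| by move: hX2; rewrite (cardsD1 j X) hj.
    move=> /card_gt0P [j' hj'].
    move: hj'; rewrite !inE => /andP [hjj' hj'X].
    have hS : j' |: [set j] \in twocl L.
      apply: (side X hX); first by rewrite subUset !sub1set hj hj'X.
      by rewrite cardsU1 cards1 inE hjj'.
    apply/andP; split.
      by apply/set0Pn; exists j; rewrite inE.
    rewrite -(setU1K (_ : j' \notin [set j])); last by rewrite inE.
    by apply: imset2_f => //; rewrite !inE eqxx.
  case: (boolP (j \in L)) => hj.
    by apply: (key L) => //; left.
  by apply: (key (~: L)); [right | | rewrite inE].
Qed.

Lemma card_lt n k : k <= n -> #|[set i : 'I_n | i < k]| = k.
Proof.
move=> hk.
have -> : [set i : 'I_n | i < k] = [set widen_ord hk j | j : 'I_k].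
  apply/setP => i; rewrite inE; apply/idP/imsetP.
    by move=> hi; exists (Ordinal hi) => //; apply: val_inj.
  by move=> [j _ ->] /=.
rewrite card_imset ?card_ord //.
by move=> a b /(congr1 val) /= /val_inj.
Qed.

Lemma lowerA n (A : {set {set 'I_n}}) : perfect 2 A -> (n - 1) ^ 2 <= 4 * #|A| + 1.
Proof.
move=> hA.
have := lower (cover hA) setT; rewrite cardsT card_ord => h.
have : #|E A setT| <= #|A|.
  by apply: subset_leq_card; apply/subsetP => e; rewrite inE => /andP [].
lia.
Qed.

Lemma constr n k : 2 <= k -> k + 2 <= n ->
  exists A : {set {set 'I_n}}, perfect 2 A /\ #|A| = 'C(k, 2) + 'C(n - k, 2).
Proof.
move=> h1 h2.
have hkn : k <= n by lia.
set L := [set i : 'I_n | i < k].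
have cL : #|L| = k by apply: card_lt.
have cLc : #|~: L| = n - k by have := cardsC L; rewrite cL card_ord; lia.
exists (twocl L); split; last by rewrite twocl_card cL cLc.
by apply: twocl_perfect; rewrite ?cL ?cLc; lia.
Qed.

Theorem theorem3p1 (k n : nat) :
  0 < k -> 4 <= n ->
  (n = 2 * k -> is_perfect_number n 2 (k ^ 2 - k)) /\
  (n = 2 * k + 1 -> is_perfect_number n 2 (k ^ 2)).
Proof.
move=> hk hn.
split => hN.
  have [A [hA hc]] : exists A : {set {set 'I_n}}, perfect 2 A /\ #|A| = 'C(k, 2) + 'C(n - k, 2).
    apply: constr; lia.
  have b1 := bin2x k.
  split.
    exists A; split => //; rewrite hc.
    have -> : n - k = k by lia.
    rewrite expnS expn1; lia.
  move=> B /lowerA; rewrite expnS expn1 => h.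
  rewrite expnS expn1; nia.
have [A [hA hc]] : exists A : {set {set 'I_n}}, perfect 2 A /\ #|A| = 'C(k, 2) + 'C(n - k, 2).
  apply: constr; lia.
have b1 := bin2x k; have b2 := bin2x (k + 1).
split.
  exists A; split => //; rewrite hc.
  have -> : n - k = k + 1 by lia.
  rewrite expnS expn1; nia.
move=> B /lowerA; rewrite expnS expn1 => h.
rewrite expnS expn1; nia.
Qed.
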